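(* Let $X$ be a countably infinite set. The lattice $\mathrm{Cl}_{loc}(X)$ of local clones on $X$ is not embeddable (as a sublattice, i.e. via an injective map preserving binary meets and joins) into any algebraic lattice with countably many compact elements.
   Context: A clone on $X$ is a set of finitary operations $X^n\to X$ ($n\ge1$) containing all projections $\pi^n_k(x_1,\dots,x_n)=x_k$ and closed under composition. Giving $X$ the discrete topology and $X^{X^n}$ the product topology, a clone is local if for each $n$ its set of $n$-ary operations is closed in $X^{X^n}$; equivalently, an $n$-ary operation $g$ belongs to the clone whenever for every finite $B\subseteq X^n$ some $n$-ary operation of the clone agrees with $g$ on $B$. $\mathrm{Cl}_{loc}(X)$ is the complete lattice of local clones on $X$ ordered by inclusion. An element $a$ of a complete lattice is compact if whenever $a\le\bigvee A$ there is a finite $A'\subseteq A$ with $a\le\bigvee A'$; a complete lattice is algebraic if every element is a join of compact elements. *)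

(* Defs.v *)
From mathcomp Require Import all_boot.
From Stdlib Require List.
Set Implicit Arguments. Unset Strict Implicit. Unset Printing Implicit Defensive.

Definition op (X : Type) (n : nat) := ('I_n -> X) -> X.

Definition opset (X : Type) := forall n : nat, op X n -> Prop.

Definition is_clone (X : Type) (C : opset X) : Prop :=
  [/\ (forall f : op X 0, ~ C 0 f),
      (forall n (k : 'I_n), C n (fun x => x k)) &
      (forall m n (f : op X m) (g : 'I_m -> op X n),
          C m f -> (forall i, C n (g i)) -> C n (fun x => f (fun i => g i x)))].

Definition is_local (X : Type) (C : opset X) : Prop :=
  forall n (g : op X n),
    (forall B : list ('I_n -> X),
        exists2 f, C n f & forall x, List.In x B -> f x = g x) ->
    C n g.

Definition local_clone (X : Type) := {C : opset X | is_clone C /\ is_local C}.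

Definition lc_le (X : Type) (C D : local_clone X) : Prop :=
  forall n (f : op X n), proj1_sig C n f -> proj1_sig D n f.

Definition is_glb (T : Type) (le : T -> T -> Prop) (x y m : T) : Prop :=
  [/\ le m x, le m y & forall z, le z x -> le z y -> le z m].

Definition is_lub (T : Type) (le : T -> T -> Prop) (x y j : T) : Prop :=
  [/\ le x j, le y j & forall z, le x z -> le y z -> le j z].

Record complete_lattice := CompleteLattice {
  cl_car :> Type;
  cl_le : cl_car -> cl_car -> Prop;
  cl_refl : forall x, cl_le x x;
  cl_antisym : forall x y, cl_le x y -> cl_le y x -> x = y;
  cl_trans : forall x y z, cl_le x y -> cl_le y z -> cl_le x z;
  cl_sup : (cl_car -> Prop) -> cl_car;
  cl_sup_ub : forall (A : cl_car -> Prop) x, A x -> cl_le x (cl_sup A);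
  cl_sup_least : forall (A : cl_car -> Prop) z,
      (forall x, A x -> cl_le x z) -> cl_le (cl_sup A) z
}.

Definition compact (L : complete_lattice) (a : L) : Prop :=
  forall A : L -> Prop, cl_le a (cl_sup A) ->
    exists l : list L, (forall x, List.In x l -> A x) /\
                       cl_le a (cl_sup (fun x => List.In x l)).

Definition algebraic (L : complete_lattice) : Prop :=
  forall a : L, exists A : L -> Prop,
    (forall c, A c -> compact c) /\ a = cl_sup A.

Definition countably_many_compacts (L : complete_lattice) : Prop :=
  exists h : L -> nat, forall a b : L, compact a -> compact b -> h a = h b -> a = b.

Definition lattice_embedding (X : Type) (L : complete_lattice)
    (e : local_clone X -> L) : Prop :=
  [/\ injective e,
      (forall C D M, is_glb (@lc_le X) C D M -> is_glb (@cl_le L) (e C) (e D) (e M)) &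
      (forall C D J, is_lub (@lc_le X) C D J -> is_lub (@cl_le L) (e C) (e D) (e J))].

(* Main.v *)
Require Import Defs.
From mathcomp Require Import all_boot.
From Stdlib Require Import Classical ClassicalEpsilon.
Set Implicit Arguments. Unset Strict Implicit. Unset Printing Implicit Defensive.

Definition Cop (X : Type) (u : X -> X) : opset X := fun n h =>
  (exists k, forall x, h x = x k) \/ (exists k, forall x, h x = u (x k)).

Lemma Cop_clone X (u : X -> X) : (forall x, u (u x) = u x) -> is_clone (Cop u).
Proof.
move=> idem; split.
- by move=> f [[[k Hk] _]|[[k Hk] _]].
- by move=> n k; left; exists k.
- move=> m n f g [[k Hk]|[k Hk]] Hg.
  + case: (Hg k) => [[j Hj]|[j Hj]]; [left|right]; exists j => x;
      by rewrite Hk /= Hj.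
  + case: (Hg k) => [[j Hj]|[j Hj]]; right; exists j => x;
      by rewrite Hk /= Hj ?idem.
Qed.

Lemma in_In (T : eqType) (x : T) (s : seq T) : x \in s -> List.In x s.
Proof.
elim: s => //= y s IH; rewrite in_cons => /orP [/eqP ->|/IH]; by [left|right].
Qed.

Lemma Cop_local X (u : X -> X) : is_local (Cop u).
Proof.
move=> n g H; apply: NNPP => Hn.
have H1 : forall k : 'I_n, exists x, g x <> x k.
  move=> k; apply: not_all_ex_not => Hk; apply: Hn; left; by exists k.
have H2 : forall k : 'I_n, exists x, g x <> u (x k).
  move=> k; apply: not_all_ex_not => Hk; apply: Hn; right; by exists k.
have [w1 Hw1] : exists w1 : 'I_n -> ('I_n -> X), forall k, g (w1 k) <> w1 k k.
  by exists (fun k => proj1_sig (constructive_indefinite_description _ (H1 k)))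
    => k; exact: (proj2_sig (constructive_indefinite_description _ (H1 k))).
have [w2 Hw2] : exists w2 : 'I_n -> ('I_n -> X), forall k, g (w2 k) <> u (w2 k k).
  by exists (fun k => proj1_sig (constructive_indefinite_description _ (H2 k)))
    => k; exact: (proj2_sig (constructive_indefinite_description _ (H2 k))).
have [f [[k Hk]|[k Hk]] Hf] :=
  H (List.map w1 (enum 'I_n) ++ List.map w2 (enum 'I_n)).
- apply: (Hw1 k); rewrite -Hf; first exact: Hk.
  apply: List.in_or_app; left; apply: List.in_map; apply: in_In; by rewrite mem_enum.
- apply: (Hw2 k); rewrite -Hf; first exact: Hk.
  apply: List.in_or_app; right; apply: List.in_map; apply: in_In; by rewrite mem_enum.
Qed.

Definition mkLC X (u : X -> X) (idem : forall x, u (u x) = u x) : local_clone X :=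
  exist _ (Cop u) (conj (Cop_clone idem) (@Cop_local X u)).

Definition uT X (phi : X -> nat) (psi : nat -> X) (T : nat -> bool) (x : X) : X :=
  match phi x with 0 | 1 => x | 2 => psi 0 | k.+3 => if T k then psi 0 else x end.

Theorem corollary2p12 (X : Type) (hX : exists f : X -> nat, bijective f)
    (L : complete_lattice) :
  algebraic L -> countably_many_compacts L ->
  ~ exists e : local_clone X -> L, lattice_embedding e.
Proof.
case: hX => phi [psi Hpf Hfp].
move=> Halg [hc Hhc] [e [einj eglb _]].
have id_idem : forall x : X, id (id x) = id x by [].
pose J := mkLC id_idem.
have uidem T : forall x, uT phi psi T (uT phi psi T x) = uT phi psi T x.
  move=> x; rewrite /uT; case E: (phi x) => [|[|[|k]]]; rewrite ?E ?Hfp //.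
  case Tk: (T k); by rewrite ?Hfp ?E ?Tk.
pose C T := mkLC (uidem T).
have JleC T : lc_le J (C T).
  by move=> n f /= [[k Hk]|[k Hk]]; left; exists k.
have CneJ T : C T <> J.
  move=> E.
  have : proj1_sig (C T) 1 (fun x => uT phi psi T (x ord0)) by right; exists ord0.
  rewrite E /= => [[[k Hk]|[k Hk]]]; have := Hk (fun _ => psi 2);
    rewrite /uT Hfp /= => /(f_equal phi); by rewrite !Hfp.
have glbJ T : is_glb (@lc_le X) J (C T) J.
  by split; [move=> ?? //|exact: JleC|move=> Z HZ _].
have glbTT T T' m : T m <> T' m -> is_glb (@lc_le X) (C T) (C T') J.
  move=> Hm; split; [exact: JleC|exact: JleC|].
  move=> Z HZ HZ' n f Zf.
  case: (HZ _ _ Zf) => [[k Hk]|[k Hk]]; first by left; exists k.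
  case: (HZ' _ _ Zf) => [[j Hj]|[j Hj]]; first by left; exists j.
  exfalso; have := Hk (fun _ => psi m.+3); rewrite Hj /uT /= Hfp.
  move: Hm; case: (T m); case: (T' m) => // _ /(f_equal phi); by rewrite !Hfp.
have Hc T : exists c, compact c /\ cl_le c (e (C T)) /\ ~ cl_le c (e J).
  have [A [HA EA]] := Halg (e (C T)).
  apply: NNPP => Hn; apply: (CneJ T); apply: einj; apply: cl_antisym.
  - rewrite EA; apply: cl_sup_least => x Ax; apply: NNPP => Hx; apply: Hn.
    exists x; split; first exact: HA.
    by split; [rewrite EA; exact: cl_sup_ub|exact: Hx].
  - by case: (eglb _ _ _ (glbJ T)).
have [c Hcs] : exists c : (nat -> bool) -> L, forall T,
    compact (c T) /\ cl_le (c T) (e (C T)) /\ ~ cl_le (c T) (e J).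
  by exists (fun T => proj1_sig (constructive_indefinite_description _ (Hc T)))
    => T; exact: (proj2_sig (constructive_indefinite_description _ (Hc T))).
have key T T' : hc (c T) = hc (c T') -> forall m, T m = T' m.
  move=> E m; apply: NNPP => Hm.
  have Ecc := Hhc _ _ (Hcs T).1 (Hcs T').1 E.
  case: (eglb _ _ _ (glbTT T T' m Hm)) => _ _ Hl.
  apply: (Hcs T).2.2; apply: Hl; first exact: (Hcs T).2.1.
  rewrite Ecc; exact: (Hcs T').2.1.
pose D n : bool := if excluded_middle_informative
   (exists T, hc (c T) = n /\ T n = false) then true else false.
have HDn : D (hc (c D)) = true <->
    exists T, hc (c T) = hc (c D) /\ T (hc (c D)) = false.
  by rewrite /D; case: excluded_middle_informative.
case E: (D (hc (c D))).
- have [T [H1 H2]] := HDn.1 E.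
  have := key _ _ H1 (hc (c D)); by rewrite H2 E.
- have : D (hc (c D)) = true by apply HDn.2; exists D; split.
  by rewrite E.
Qed.
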